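(* For every $n,k\ge1$ and $p\in[0,1]$, there is a randomized selection algorithm in the rank query model that runs in $k$ rounds, succeeds with probability $p$ on every input of length $n$, and issues an expected number of queries at most $np\frac{k+1}{2k}+1$ on every input.
   Context: Selection with rank queries: there is a vector $\vec{x}=(x_1,\ldots,x_n)$ whose ranks form an unknown permutation of $\{1,\ldots,n\}$; a rank $r$ is given and the goal is to output the index $i$ with $\mathrm{rank}(x_i)=r$. Queries have the form ''How is $\mathrm{rank}(x_j)$ compared to $m$?'', with answer ''$<$'', ''$=$'' or ''$>$''. An algorithm runs in $k$ rounds if in each of $k$ rounds it submits a set of queries chosen depending only on answers of earlier rounds (and its randomness), then receives all answers. A randomized algorithm is a distribution over deterministic algorithms; probabilities and expectations are over its randomness. *)

(* Defs.v *)
From HB Require Import structures.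
From mathcomp Require Import all_boot all_order all_algebra all_fingroup.
From mathcomp Require Import reals.
Set Implicit Arguments. Unset Strict Implicit. Unset Printing Implicit Defensive.
Import Order.TTheory GRing.Theory Num.Theory.
Local Open Scope ring_scope.

(* Rank query model.
   The input vector x = (x_1..x_n) is described by its rank permutation:
   s : 'S_n, and rank(x_i) = (s i).+1 in {1,..,n} (indices are 'I_n). *)

Definition rank_of (n : nat) (s : 'S_n) (i : 'I_n) : nat := (s i).+1.

Inductive answer := ALt | AEq | AGt.

Definition query (n : nat) := ('I_n * nat)%type.

Definition answer_query (n : nat) (s : 'S_n) (q : query n) : answer :=
  let v := rank_of s q.1 in
  if (v < q.2)%N then ALt else if v == q.2 then AEq else AGt.

Definition history (n : nat) := seq (query n * answer)%type.

(* A deterministic algorithm: given the target rank r, the set (list) of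
   queries submitted in round t depends only on t and on the answers of
   earlier rounds (the history); after the last round it outputs an index,
   or None (failure). *)
Record detalg (n : nat) := DetAlg {
  da_round : nat -> nat -> history n -> seq (query n);   (* r -> t -> hist *)
  da_output : nat -> history n -> option 'I_n
}.

Fixpoint run_hist (n : nat) (A : detalg n) (s : 'S_n) (r t : nat) : history n :=
  match t with
  | 0 => [::]
  | t'.+1 =>
      let h := run_hist A s r t' in
      h ++ [seq (q, answer_query s q) | q <- da_round A r t' h]
  end.

Definition num_queries (n : nat) (A : detalg n) (k : nat) (s : 'S_n) (r : nat)
  : nat := size (run_hist A s r k).

Definition succeeds (n : nat) (A : detalg n) (k : nat) (s : 'S_n) (r : nat)
  : bool :=
  if da_output A r (run_hist A s r k) is Some i then rank_of s i == r
  else false.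

(* A randomized algorithm: a (finitely supported) probability distribution
   over deterministic algorithms, given as a list of (weight, algorithm). *)
Definition rand_alg (R : realType) (n : nat) := seq (R * detalg n)%type.

Definition is_distribution (R : realType) (n : nat) (D : rand_alg R n) : Prop :=
  (forall a, a \in map fst D -> 0 <= a) /\ \sum_(a <- D) a.1 = 1.

Definition success_prob (R : realType) (n : nat) (D : rand_alg R n)
  (k : nat) (s : 'S_n) (r : nat) : R :=
  \sum_(a <- D) a.1 * (succeeds a.2 k s r)%:R.

Definition expected_queries (R : realType) (n : nat) (D : rand_alg R n)
  (k : nat) (s : 'S_n) (r : nat) : R :=
  \sum_(a <- D) a.1 * (num_queries a.2 k s r)%:R.

(* Main.v *)
Require Import Defs.
From HB Require Import structures.
From mathcomp Require Import all_boot all_order all_algebra all_fingroup.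
From mathcomp Require Import reals.
From mathcomp Require Import zify ring lra.
Set Implicit Arguments. Unset Strict Implicit. Unset Printing Implicit Defensive.
Import Order.TTheory GRing.Theory Num.Theory.

Lemma count_enum_sum (T : finType) (a : pred T) : count a (enum T) = \sum_(i : T) (a i : nat).
Proof. by rewrite -sum1_count big_mkcond /= big_enum_cond /= big_mkcond; apply: eq_bigr => i _; case: (a i). Qed.

Definition isEq (n : nat) (qa : query n * answer) : bool := if qa.2 is AEq then true else false.

Definition gidx (n' b : nat) (c j : 'I_n'.+1) : nat := (nat_of_ord (j + c)%R %/ b)%N.

Definition rot_alg (n' b : nat) (c : 'I_n'.+1) : detalg n'.+1 :=
  DetAlg (fun r t h => if has (@isEq _) h then [::]
                       else [seq (j, r) | j <- enum 'I_n'.+1 & gidx b c j == t])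
         (fun r h => if [seq qa <- h | isEq qa] is qa :: _ then Some qa.1.1 else None).

Lemma isEq_ans (n' : nat) (s : 'S_n'.+1) (istar j : 'I_n'.+1) r :
  rank_of s istar = r -> isEq ((j, r), answer_query s (j, r)) = (j == istar).
Proof.
move=> Hr; rewrite /isEq /answer_query /=.
have E : (rank_of s j == r) = (j == istar).
  rewrite -Hr /rank_of eqSS; apply/eqP/eqP => [/val_inj/perm_inj //|->//].
case: ltnP => H.
  symmetry; apply/negbTE; rewrite -E; apply/negP => /eqP; lia.
by case: eqP E => //= _ <-.
Qed.

Lemma run_inv (n' b : nat) (c : 'I_n'.+1) (s : 'S_n'.+1) r istar :
  rank_of s istar = r -> forall t,
  let h := run_hist (rot_alg b c) s r t in
  [/\ all (fun qa => isEq qa ==> (rank_of s qa.1.1 == r)) h,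
      has (@isEq _) h = (gidx b c istar < t)%N &
      size h = count (fun j => (gidx b c j < t) && (gidx b c j <= gidx b c istar))%N (enum 'I_n'.+1)].
Proof.
move=> Hr; elim=> [|t [IHa IHh IHs]] /=.
  by rewrite count_enum_sum big1.
set h := run_hist _ s r t in IHa IHh IHs *.
rewrite IHh.
case: ltnP => Hlt.
  rewrite cats0 IHa IHs; split => //; first by rewrite IHh Hlt ltnS ltnW.
  symmetry; apply: eq_count => j /=; case: (leqP (gidx b c j) (gidx b c istar)) => Hj; last by rewrite !andbF.
  by rewrite !andbT; apply/idP/idP => H; lia.
rewrite all_cat has_cat IHa IHh size_cat size_map IHs; split.
- rewrite all_map /=; apply/allP => q /mapP[j _ ->] /=.
  rewrite (isEq_ans _ Hr); apply/implyP => /eqP ->; exact/eqP.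
- rewrite ltnNge Hlt /= has_map /=.
  have -> : has (preim (fun q => (q, answer_query s q)) (@isEq _)) [seq (j, r) | j <- enum 'I_n'.+1 & gidx b c j == t]
     = has (fun j => j == istar) [seq j <- enum 'I_n'.+1 | gidx b c j == t].
    by rewrite has_map; apply: eq_has => j /=; rewrite (isEq_ans _ Hr).
  apply/idP/idP.
    by case/hasP=> j; rewrite mem_filter => /andP[/eqP <- _] /eqP ->; lia.
  move=> H; apply/hasP; exists istar => //; rewrite mem_filter mem_enum andbT.
  apply/eqP; lia.
- rewrite size_map size_filter !count_enum_sum -big_split /=; apply: eq_bigr => j _.
  case: (ltngtP (gidx b c j) t) => H /=; lia.
Qed.
Lemma class_bound (n' b T : nat) : (0 < b)%N ->
  (\sum_(j : 'I_n'.+1) ((j %/ b == T)%N : nat) <= b)%N.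
Proof.
move=> b0.
have -> : \sum_(j : 'I_n'.+1) ((j %/ b == T)%N : nat) = #|[pred j : 'I_n'.+1 | j %/ b == T]|.
  by rewrite -sum1_card [in RHS]big_mkcond; apply: eq_bigr => j _; rewrite inE; case: (_ == _).
rewrite -[X in (_ <= X)%N]card_ord.
apply: (@leq_card_in _ _ (fun j : 'I_n'.+1 => Ordinal (ltn_pmod j b0))).
move=> x y; rewrite !inE => /eqP Hx /eqP Hy [] Hm.
apply: val_inj; rewrite /= (divn_eq x b) (divn_eq y b) Hx Hy Hm //.
Qed.

Lemma pair_bound (n' b : nat) (i : 'I_n'.+1) : (0 < b)%N ->
  (2 * \sum_(c : 'I_n'.+1) \sum_(j : 'I_n'.+1) ((gidx b c j <= gidx b c i)%N : nat)
    <= n'.+1 * n'.+1 + n'.+1 * b)%N.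
Proof.
move=> b0.
have E1 : \sum_(c : 'I_n'.+1) \sum_(j : 'I_n'.+1) ((gidx b c j <= gidx b c i)%N : nat)
   = \sum_(c : 'I_n'.+1) \sum_(j : 'I_n'.+1) ((j %/ b <= c %/ b)%N : nat).
  symmetry; rewrite (reindex_inj (GRing.addrI i)) /=; apply: eq_bigr => c _.
  rewrite (reindex_inj (GRing.addIr c)) /=; apply: eq_bigr => j _.
  by [].  
rewrite E1 mul2n -addnn {2}exchange_big /= -big_split /=.
have -> : \sum_(c : 'I_n'.+1) (\sum_(j : 'I_n'.+1) ((j %/ b <= c %/ b)%N : nat) + \sum_(j : 'I_n'.+1) ((c %/ b <= j %/ b)%N : nat))
   = \sum_(c : 'I_n'.+1) (n'.+1 + \sum_(j : 'I_n'.+1) ((j %/ b == c %/ b)%N : nat)).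
  apply: eq_bigr => c _; rewrite -big_split /=.
  rewrite -[X in X + _](card_ord n'.+1) -sum1_card -big_split /=.
  apply: eq_bigr => j _; case: ltngtP => //.
rewrite big_split /= sum_nat_const card_ord.
rewrite leq_add2l -[X in (_ <= X * _)%N](card_ord n'.+1) -sum_nat_const.
by apply: leq_sum => c _; apply: class_bound.
Qed.

Definition failalg (n : nat) : detalg n := DetAlg (fun _ _ _ => [::]) (fun _ _ => None).

Lemma fail_hist n (s : 'S_n) r t : run_hist (failalg n) s r t = [::].
Proof. by elim: t => //= t ->. Qed.

Lemma filter_head (T : Type) (P a : pred T) (h : seq T) :
  all P h -> has a h -> exists qa tl, filter a h = qa :: tl /\ a qa && P qa.
Proof.
elim: h => //= x h IH /andP[Px Ph]; case: ifP => ax /=.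
  by move=> _; exists x, (filter a h); rewrite ax Px.
by apply: IH.
Qed.

Lemma rot_facts (n' b k : nat) (c : 'I_n'.+1) (s : 'S_n'.+1) r istar :
  (n'.+1 <= b * k)%N -> rank_of s istar = r ->
  succeeds (rot_alg b c) k s r /\
  num_queries (rot_alg b c) k s r = \sum_(j : 'I_n'.+1) ((gidx b c j <= gidx b c istar)%N : nat).
Proof.
move=> Hbk Hr.
have Hg : forall j : 'I_n'.+1, (gidx b c j < k)%N.
  move=> j; rewrite /gidx; have := ltn_ord (j + c)%R => H.
  have b0 : (0 < b)%N by move: Hbk; case: b => //; rewrite mul0n.
  by rewrite ltn_divLR // mulnC; apply: leq_trans Hbk.
have [Ha Hh Hs] := run_inv b c Hr k.
split; last first.
  rewrite /num_queries Hs count_enum_sum; apply: eq_bigr => j _; by rewrite Hg.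
rewrite /succeeds /=.
move: Hh; rewrite Hg => Hh.
set h := run_hist _ s r k in Ha Hh *.
have [qa [tl [E Hq]]] := filter_head Ha Hh.
by rewrite E; move: Hq => /andP[Hq /implyP]; apply.
Qed.
Local Open Scope ring_scope.

Theorem proposition12 (R : realType) (n k : nat) (p : R) :
  (1 <= n)%N -> (1 <= k)%N -> 0 <= p <= 1 ->
  exists D : rand_alg R n,
    is_distribution D /\
    forall (s : 'S_n) (r : nat), (1 <= r <= n)%N ->
      success_prob D k s r = p /\
      expected_queries D k s r
        <= n%:R * p * ((k.+1)%:R / (2 * k)%:R) + 1.
Proof.
move=> n1 k1 /andP[p0 p1].
case: n n1 => [//|n'] _.
set b := ((n'.+1 + k.-1) %/ k)%N.
have Hbk : (n'.+1 <= b * k)%N.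
  by rewrite /b; have := divn_eq (n'.+1 + k.-1) k; have := ltn_pmod (n'.+1 + k.-1) k1; lia.
have Hbk2 : (b * k <= n'.+1 + k.-1)%N by rewrite /b leq_trunc_div.
have b0 : (0 < b)%N by move: Hbk; case: (b) => //; rewrite mul0n.
have N0 : (n'.+1)%:R != 0 :> R by rewrite pnatr_eq0.
exists ((1 - p, failalg _) :: [seq (p / (n'.+1)%:R, rot_alg b c) | c <- enum 'I_n'.+1]).
split.
  split.
    move=> a; rewrite /= inE => /orP[/eqP -> | ]; first by rewrite subr_ge0.
    rewrite -map_comp => /mapP[c _ ->] /=.
    by rewrite divr_ge0.
  rewrite big_cons big_map /= big_enum_cond /= sumr_const card_ord -[_ *+ n'.+1]mulr_natr divfK //.
  by rewrite subrK.
move=> s r /andP[r1 rn].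
have rlt : (r.-1 < n'.+1)%N by lia.
set istar := (s^-1)%g (Ordinal rlt).
have Hr : rank_of s istar = r by rewrite /rank_of /istar permKV /=; lia.
split.
  rewrite /success_prob big_cons big_map /= mulr0 add0r.
  under eq_bigr => c _ do rewrite (proj1 (rot_facts c Hbk Hr)) mulr1.
  by rewrite big_enum_cond /= sumr_const card_ord -[_ *+ n'.+1]mulr_natr divfK.
rewrite /expected_queries big_cons big_map /= {1}/num_queries fail_hist /= mulr0 add0r.
under eq_bigr => c _ do rewrite (proj2 (rot_facts c Hbk Hr)).
rewrite -mulr_sumr -natr_sum big_enum_cond /=.
set S := (\sum_(i < n'.+1) _)%N.
have HS := pair_bound istar b0.
rewrite -/S in HS.
have HS2 : (S * (2 * k) <= n'.+1 * n'.+1 * k.+1 + 2 * k * n'.+1)%N.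
  have : (2 * S * k <= (n'.+1 * n'.+1 + n'.+1 * b) * k)%N by rewrite leq_mul2r HS orbT.
  nia.
have k0 : (2 * k)%:R != 0 :> R by rewrite pnatr_eq0; lia.
have kp : 0 < (2 * k)%:R :> R by rewrite ltr0n; lia.
have Np : 0 < (n'.+1)%:R :> R by rewrite ltr0n.
set X := (n'.+1)%:R * ((k.+1)%:R / (2 * k)%:R) : R.
have Hx : (S%:R / (n'.+1)%:R : R) <= X + 1.
  rewrite ler_pdivrMr //.
  have -> : (X + 1) * (n'.+1)%:R = (n'.+1 * n'.+1 * k.+1 + 2 * k * n'.+1)%:R / (2 * k)%:R.
    rewrite /X !natrD !natrM; field; move: k0; rewrite natrM.
  by move=> H; rewrite -mulr2n -mulr_natl.
  by rewrite ler_pdivlMr // -natrM ler_nat.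
have -> : p / (n'.+1)%:R * S%:R = p * (S%:R / (n'.+1)%:R) by rewrite mulrA mulrAC.
apply: le_trans (_ : p * (X + 1) <= _); first by rewrite ler_wpM2l.
have -> : (n'.+1)%:R * p * ((k.+1)%:R / (2 * k)%:R) = p * X by rewrite /X; ring.
by rewrite mulrDr mulr1 lerD2l.
Qed.
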